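(* Let $k\ge1$, $\lambda>0$, $0<\theta<1$, and $F(x,y,\theta)=\frac{1+x+\theta y}{1+x+y}$. Define sequences by $z^-_{1,1}=z^-_{2,1}=\lambda\theta^k$, $z^+_{1,1}=z^+_{2,1}=\lambda$ and $$z^-_{1,n+1}=\lambda F(z^-_{1,n},z^+_{2,n},\theta)^k,\ z^+_{1,n+1}=\lambda F(z^+_{1,n},z^-_{2,n},\theta)^k,\ z^-_{2,n+1}=\lambda F(z^-_{2,n},z^+_{1,n},\theta)^k,\ z^+_{2,n+1}=\lambda F(z^+_{2,n},z^-_{1,n},\theta)^k.$$ Then the limits $z^\pm_j=\lim_{n\to\infty}z^\pm_{j,n}$ ($j=1,2$) exist, the vector $(z^-_1,z^+_1,z^-_2,z^+_2)$ solves $$z^-_1=\lambda F(z^-_1,z^+_2,\theta)^k,\ z^+_1=\lambda F(z^+_1,z^-_2,\theta)^k,\ z^-_2=\lambda F(z^-_2,z^+_1,\theta)^k,\ z^+_2=\lambda F(z^+_2,z^-_1,\theta)^k,\quad ( * )$$ and every family $(z_{1,i},z_{2,i})_{i\in\mathbb{T}^k}$ of positive numbers satisfying, for all $i\in\mathbb{T}^k$, $$z_{1,i}=\lambda\prod_{j\in S(i)}F(z_{1,j},z_{2,j},\theta),\qquad z_{2,i}=\lambda\prod_{j\in S(i)}F(z_{2,j},z_{1,j},\theta)\quad ( ** )$$ satisfies $z^-_j\le z_{j,i}\le z^+_j$ for $j=1,2$ and all $i\in\mathbb{T}^k$.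
   Context: $\mathbb{T}^k$ is the rooted Cayley tree of order $k$ and $S(i)$ denotes the set of the $k$ direct successors of a vertex $i$ (neighbours of $i$ one step further from the root). System ( ** ) is the exponentiated form (with $z_{1,i}=e^{\tilde h_{+,i}}$, $z_{2,i}=e^{\tilde h_{-,i}}$) of the compatibility equations for splitting Gibbs measures of the Soft-Core Widom–Rowlinson model. *)

(* Defs.v *)
From Stdlib Require Import Reals List.
Import ListNotations.
Open Scope R_scope.

Definition F (x y theta : R) : R := (1 + x + theta * y) / (1 + x + y).

(* The rooted Cayley tree T^k: a vertex is the word (list) of child indices
   read from the vertex back to the root; the root is [] and the k direct
   successors of a vertex v are (j :: v) for j = 0, ..., k-1. *)
Definition vertex (k : nat) (v : list nat) : Prop := Forall (fun a => (a < k)%nat) v.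

Definition prod_succ (k : nat) (f : list nat -> R) (v : list nat) : R :=
  fold_right Rmult 1 (map (fun j => f (j :: v)) (seq 0 k)).

(* The iteration: zseq n = (z^-_{1,n+1}, z^+_{1,n+1}, z^-_{2,n+1}, z^+_{2,n+1}) *)
Fixpoint zseq (k : nat) (lam theta : R) (n : nat) : R * R * R * R :=
  match n with
  | O => (lam * theta ^ k, lam, lam * theta ^ k, lam)
  | S n' =>
      let '(zm1, zp1, zm2, zp2) := zseq k lam theta n' in
      (lam * F zm1 zp2 theta ^ k, lam * F zp1 zm2 theta ^ k,
       lam * F zm2 zp1 theta ^ k, lam * F zp2 zm1 theta ^ k)
  end.

Definition zm1_seq k lam theta (n : nat) : R := let '(a, _, _, _) := zseq k lam theta n in a.
Definition zp1_seq k lam theta (n : nat) : R := let '(_, a, _, _) := zseq k lam theta n in a.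
Definition zm2_seq k lam theta (n : nat) : R := let '(_, _, a, _) := zseq k lam theta n in a.
Definition zp2_seq k lam theta (n : nat) : R := let '(_, _, _, a) := zseq k lam theta n in a.

(* Main.v *)
Require Import Defs.
From Stdlib Require Import Reals List Lra Lia Psatz.
Open Scope R_scope.

Lemma cv_const (c : R) : Un_cv (fun _ => c) c.
Proof. intros e he; exists 0%nat; intros; unfold Rdist; rewrite Rminus_diag, Rabs_R0; lra. Qed.

Lemma cv_pow (u : nat -> R) l k : Un_cv u l -> Un_cv (fun n => u n ^ k) (l ^ k).
Proof.
  intro H; induction k as [|k IH]; simpl.
  - apply cv_const.
  - apply (CV_mult _ _ _ _ H IH).
Qed.

Lemma cv_inv (u : nat -> R) l : l <> 0 -> Un_cv u l -> Un_cv (fun n => / u n) (/ l).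
Proof.
  intros hl H.
  assert (C : continuity_pt (/ id)%F l).
  { apply continuity_pt_inv; [apply derivable_continuous_pt, derivable_pt_id | exact hl]. }
  exact (continuity_seq _ _ _ C H).
Qed.

Lemma cv_F (u w : nat -> R) a b theta :
  0 <= a -> 0 <= b -> Un_cv u a -> Un_cv w b ->
  Un_cv (fun n => F (u n) (w n) theta) (F a b theta).
Proof.
  intros ha hb Hu Hw. unfold F, Rdiv.
  apply CV_mult.
  - apply CV_plus; [apply CV_plus; [apply cv_const| exact Hu]|].
    apply (CV_mult _ _ _ _ (cv_const theta) Hw).
  - apply cv_inv; [lra|]. apply CV_plus; [apply CV_plus; [apply cv_const| exact Hu]|exact Hw].
Qed.

Lemma F_range x y theta : 0 <= x -> 0 <= y -> 0 < theta < 1 ->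
  theta <= F x y theta <= 1.
Proof.
  intros hx hy ht. unfold F. split.
  - apply Rmult_le_reg_r with (1 + x + y); [lra|].
    unfold Rdiv; rewrite Rmult_assoc, Rinv_l by lra. nra.
  - apply Rmult_le_reg_r with (1 + x + y); [lra|].
    unfold Rdiv; rewrite Rmult_assoc, Rinv_l by lra. nra.
Qed.

Lemma F_mono x y x' y' theta : 0 <= x <= x' -> 0 <= y' <= y -> 0 < theta < 1 ->
  F x y theta <= F x' y' theta.
Proof.
  intros hx hy ht. unfold F, Rdiv.
  apply Rmult_le_reg_r with ((1 + x + y) * (1 + x' + y')); [nra|].
  replace ((1 + x + theta * y) * / (1 + x + y) * ((1 + x + y) * (1 + x' + y')))
    with ((1 + x + theta * y) * (1 + x' + y')) by (field; lra).
  replace ((1 + x' + theta * y') * / (1 + x' + y') * ((1 + x + y) * (1 + x' + y')))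
    with ((1 + x' + theta * y') * (1 + x + y)) by (field; lra).
  assert (h1 : (1 + x) * y' <= (1 + x') * y) by nra.
  nra.
Qed.

Lemma pow_mono a b k : 0 <= a <= b -> a ^ k <= b ^ k.
Proof. intros; apply pow_incr; lra. Qed.

Lemma prod_bounds (f : nat -> R) lo hi (l : list nat) :
  0 <= lo -> (forall j, In j l -> lo <= f j <= hi) ->
  lo ^ length l <= fold_right Rmult 1 (map f l) <= hi ^ length l.
Proof.
  intros hlo; induction l as [|j l IH]; intros H; simpl; [lra|].
  assert (H1 := H j (or_introl eq_refl)).
  assert (H2 : lo ^ length l <= fold_right Rmult 1 (map f l) <= hi ^ length l)
    by (apply IH; intros; apply H; right; auto).
  assert (0 <= lo ^ length l) by (apply pow_le; lra).
  split; apply Rmult_le_compat; nra.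
Qed.

Lemma cv_ext (u w : nat -> R) l : (forall n, u n = w n) -> Un_cv u l -> Un_cv w l.
Proof. intros E H e he; destruct (H e he) as [N HN]; exists N; intros n hn; rewrite <- E; auto. Qed.

Lemma cv_S (u : nat -> R) l : Un_cv u l -> Un_cv (fun n => u (S n)) l.
Proof. intros H e he; destruct (H e he) as [N HN]; exists N; intros n hn; apply HN; lia. Qed.

Lemma cv_le_const (u : nat -> R) l c : Un_cv u l -> (forall n, u n <= c) -> l <= c.
Proof. intros H Hc; eapply Rle_cv_lim; [exact Hc|exact H|apply cv_const]. Qed.

Lemma cv_ge_const (u : nat -> R) l c : Un_cv u l -> (forall n, c <= u n) -> c <= l.
Proof. intros H Hc; eapply Rle_cv_lim; [exact Hc|apply cv_const|exact H]. Qed.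

Section Main.
Variables (k : nat) (lam theta : R).
Hypotheses (hk : (1 <= k)%nat) (hl : 0 < lam) (ht : 0 < theta < 1).

Let G x y := lam * F x y theta ^ k.
Let a := zm1_seq k lam theta.
Let b := zp1_seq k lam theta.

Lemma zform n : zseq k lam theta n = (a n, b n, a n, b n).
Proof.
  induction n as [|n IH]; [reflexivity|].
  assert (E : zseq k lam theta (S n) = (G (a n) (b n), G (b n) (a n), G (a n) (b n), G (b n) (a n))).
  { cbn [zseq]. rewrite IH. reflexivity. }
  unfold a, b, zm1_seq, zp1_seq. rewrite E. reflexivity.
Qed.

Lemma a_S n : a (S n) = G (a n) (b n).
Proof. unfold a at 1, zm1_seq. cbn [zseq]. rewrite zform. reflexivity. Qed.
Lemma b_S n : b (S n) = G (b n) (a n).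
Proof. unfold b at 1, zp1_seq. cbn [zseq]. rewrite zform. reflexivity. Qed.
Lemma a2 n : zm2_seq k lam theta n = a n.
Proof. unfold zm2_seq. rewrite zform. reflexivity. Qed.
Lemma b2 n : zp2_seq k lam theta n = b n.
Proof. unfold zp2_seq. rewrite zform. reflexivity. Qed.

Lemma thk : 0 < theta ^ k <= 1.
Proof. split; [apply pow_lt; lra|]. rewrite <- (pow1 k). apply pow_mono; lra. Qed.

Lemma G_range x y : 0 <= x -> 0 <= y -> lam * theta ^ k <= G x y <= lam.
Proof.
  intros hx hy. destruct (F_range x y theta hx hy ht) as [h1 h2]. unfold G.
  split.
  - apply Rmult_le_compat_l; [lra|]. apply pow_mono; lra.
  - rewrite <- (Rmult_1_r lam) at 2. apply Rmult_le_compat_l; [lra|].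
    rewrite <- (pow1 k). apply pow_mono; lra.
Qed.

Lemma G_mono x y x' y' : 0 <= x <= x' -> 0 <= y' <= y -> G x y <= G x' y'.
Proof.
  intros hx hy. unfold G. apply Rmult_le_compat_l; [lra|].
  apply pow_mono. split; [|apply F_mono; auto].
  destruct (F_range x y theta) ; lra.
Qed.

Lemma ab_range n : lam * theta ^ k <= a n <= lam /\ lam * theta ^ k <= b n <= lam.
Proof.
  assert (T := thk). assert (0 < lam * theta ^ k) by (apply Rmult_lt_0_compat; lra).
  induction n as [|n IH].
  - unfold a, b, zm1_seq, zp1_seq; simpl. nra.
  - rewrite (a_S n), (b_S n). split; apply G_range; lra.
Qed.

Lemma ab_mono n : a n <= a (S n) /\ b (S n) <= b n /\ a n <= b n.
Proof.
  assert (T := thk). assert (0 < lam * theta ^ k) by (apply Rmult_lt_0_compat; lra).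
  induction n as [|n IH].
  - destruct (ab_range 1) as [[h1 h2] [h3 h4]].
    unfold a at 1 3, b at 2 3, zm1_seq, zp1_seq; simpl. nra.
  - destruct (ab_range n) as [[h1 h2] [h3 h4]].
    destruct (ab_range (S n)) as [[h5 h6] [h7 h8]].
    destruct IH as [i1 [i2 i3]].
    split; [|split].
    + rewrite (a_S (S n)). rewrite (a_S n) at 1. apply G_mono; lra.
    + rewrite (b_S (S n)). rewrite (b_S n) at 2. apply G_mono; lra.
    + rewrite (b_S n), (a_S n). apply G_mono; lra.
Qed.

Lemma tree_bound (z1 z2 : list nat -> R) :
  (forall v, vertex k v -> 0 < z1 v /\ 0 < z2 v) ->
  (forall v, vertex k v ->
     z1 v = lam * prod_succ k (fun w => F (z1 w) (z2 w) theta) v /\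
     z2 v = lam * prod_succ k (fun w => F (z2 w) (z1 w) theta) v) ->
  forall n v, vertex k v -> a n <= z1 v <= b n /\ a n <= z2 v <= b n.
Proof.
  intros Hpos Heq n.
  assert (T := thk).
  assert (Hch : forall v j, vertex k v -> In j (seq 0 k) -> vertex k (j :: v)).
  { intros v j hv hj. apply in_seq in hj. constructor; [lia|exact hv]. }
  assert (Hlen : length (seq 0 k) = k) by apply length_seq.
  induction n as [|n IH]; intros v hv; destruct (Heq v hv) as [e1 e2].
  - unfold a, b, zm1_seq, zp1_seq; simpl.
    rewrite e1, e2; unfold prod_succ.
    assert (B1 := prod_bounds (fun j => F (z1 (j :: v)) (z2 (j :: v)) theta) theta 1 (seq 0 k)).
    assert (B2 := prod_bounds (fun j => F (z2 (j :: v)) (z1 (j :: v)) theta) theta 1 (seq 0 k)).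
    rewrite Hlen, pow1 in B1, B2.
    destruct B1 as [b1 b2]; [lra| |].
    { intros j hj. destruct (Hpos _ (Hch v j hv hj)). apply F_range; lra. }
    destruct B2 as [b3 b4]; [lra| |].
    { intros j hj. destruct (Hpos _ (Hch v j hv hj)). apply F_range; lra. }
    split; split; nra.
  - rewrite a_S, b_S. unfold G.
    destruct (ab_range n) as [[h1 h2] [h3 h4]].
    assert (0 < lam * theta ^ k) by (apply Rmult_lt_0_compat; lra).
    assert (flo : 0 <= F (a n) (b n) theta) by (destruct (F_range (a n) (b n) theta); lra).
    rewrite e1, e2; unfold prod_succ.
    assert (B1 := prod_bounds (fun j => F (z1 (j :: v)) (z2 (j :: v)) theta)
                   (F (a n) (b n) theta) (F (b n) (a n) theta) (seq 0 k) flo).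
    assert (B2 := prod_bounds (fun j => F (z2 (j :: v)) (z1 (j :: v)) theta)
                   (F (a n) (b n) theta) (F (b n) (a n) theta) (seq 0 k) flo).
    rewrite Hlen in B1, B2.
    destruct B1 as [b1 b2].
    { intros j hj. destruct (Hpos _ (Hch v j hv hj)). destruct (IH _ (Hch v j hv hj)).
      split; apply F_mono; lra. }
    destruct B2 as [b3 b4].
    { intros j hj. destruct (Hpos _ (Hch v j hv hj)). destruct (IH _ (Hch v j hv hj)).
      split; apply F_mono; lra. }
    split; split; nra.
Qed.

Lemma main_sec :
  exists zm1 zp1 zm2 zp2 : R,
    Un_cv (zm1_seq k lam theta) zm1 /\ Un_cv (zp1_seq k lam theta) zp1 /\
    Un_cv (zm2_seq k lam theta) zm2 /\ Un_cv (zp2_seq k lam theta) zp2 /\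
    zm1 = lam * F zm1 zp2 theta ^ k /\ zp1 = lam * F zp1 zm2 theta ^ k /\
    zm2 = lam * F zm2 zp1 theta ^ k /\ zp2 = lam * F zp2 zm1 theta ^ k /\
    (forall z1 z2 : list nat -> R,
       (forall v, vertex k v -> 0 < z1 v /\ 0 < z2 v) ->
       (forall v, vertex k v ->
          z1 v = lam * prod_succ k (fun w => F (z1 w) (z2 w) theta) v /\
          z2 v = lam * prod_succ k (fun w => F (z2 w) (z1 w) theta) v) ->
       forall v, vertex k v ->
         zm1 <= z1 v <= zp1 /\ zm2 <= z2 v <= zp2).
Proof.
  assert (T := thk). assert (P : 0 < lam * theta ^ k) by (apply Rmult_lt_0_compat; lra).
  destruct (growing_cv a) as [A HA].
  { intro n; apply ab_mono. }
  { exists lam. intros x [i ->]. apply ab_range. }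
  destruct (decreasing_cv b) as [B HB].
  { intro n; apply ab_mono. }
  { exists (- (lam * theta ^ k)). intros x [i ->]. unfold opp_seq.
    destruct (ab_range i) as [_ [h _]]. lra. }
  assert (A0 : lam * theta ^ k <= A) by (apply (cv_ge_const a); auto; intro; apply ab_range).
  assert (B0 : lam * theta ^ k <= B) by (apply (cv_ge_const b); auto; intro; apply ab_range).
  assert (HGA : Un_cv (fun n => G (a n) (b n)) (G A B)).
  { unfold G. apply CV_mult; [apply cv_const|]. apply cv_pow. apply cv_F; auto; lra. }
  assert (HGB : Un_cv (fun n => G (b n) (a n)) (G B A)).
  { unfold G. apply CV_mult; [apply cv_const|]. apply cv_pow. apply cv_F; auto; lra. }
  assert (FA : A = G A B).
  { apply (UL_sequence (fun n => a (S n))); [apply cv_S; auto|].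
    apply (cv_ext _ _ _ (fun n => eq_sym (a_S n))); auto. }
  assert (FB : B = G B A).
  { apply (UL_sequence (fun n => b (S n))); [apply cv_S; auto|].
    apply (cv_ext _ _ _ (fun n => eq_sym (b_S n))); auto. }
  exists A, B, A, B.
  split; [exact HA|]. split; [exact HB|].
  split; [apply (cv_ext a); [intro; symmetry; apply a2|exact HA]|].
  split; [apply (cv_ext b); [intro; symmetry; apply b2|exact HB]|].
  split; [exact FA|]. split; [exact FB|]. split; [exact FA|]. split; [exact FB|].
  intros z1 z2 Hpos Heq v hv.
  assert (TB := tree_bound z1 z2 Hpos Heq).
  split; split.
  - apply (cv_le_const a); auto; intro n; apply (TB n v hv).
  - apply (cv_ge_const b); auto; intro n; apply (TB n v hv).
  - apply (cv_le_const a); auto; intro n; apply (TB n v hv).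
  - apply (cv_ge_const b); auto; intro n; apply (TB n v hv).
Qed.

End Main.

Theorem mainTheorem12 (k : nat) (lam theta : R) :
  (1 <= k)%nat -> 0 < lam -> 0 < theta < 1 ->
  exists zm1 zp1 zm2 zp2 : R,
    Un_cv (zm1_seq k lam theta) zm1 /\ Un_cv (zp1_seq k lam theta) zp1 /\
    Un_cv (zm2_seq k lam theta) zm2 /\ Un_cv (zp2_seq k lam theta) zp2 /\
    zm1 = lam * F zm1 zp2 theta ^ k /\ zp1 = lam * F zp1 zm2 theta ^ k /\
    zm2 = lam * F zm2 zp1 theta ^ k /\ zp2 = lam * F zp2 zm1 theta ^ k /\
    (forall z1 z2 : list nat -> R,
       (forall v, vertex k v -> 0 < z1 v /\ 0 < z2 v) ->
       (forall v, vertex k v ->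
          z1 v = lam * prod_succ k (fun w => F (z1 w) (z2 w) theta) v /\
          z2 v = lam * prod_succ k (fun w => F (z2 w) (z1 w) theta) v) ->
       forall v, vertex k v ->
         zm1 <= z1 v <= zp1 /\ zm2 <= z2 v <= zp2).
Proof.
  intros hk hl ht. apply main_sec; assumption.
Qed.
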